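(* Let $W\le W'\le S_d$ with $|W':W|=2$, let $\lambda\in P_d$, and let $a\ne a_1$ be $W$-orbits in $T_\lambda$ contained in the same $W'$-orbit. Then for every $\chi\in X_W$ that separates $a$ from $a_1$ there exists $\nu\in N'$ such that $\nu\chi$ separates $a_1$ from $a$, and for every $\chi\in X_W$ that separates $a_1$ from $a$ there exists $\nu\in N'$ such that $\nu\chi$ separates $a$ from $a_1$.
   Context: Let $d\ge1$, $[d]=\{1,\dots,d\}$, $P_d$ the set of partitions of $d$. For $\lambda=(\lambda_1\ge\dots\ge\lambda_k>0)\in P_d$ a tabloid of shape $\lambda$ is a sequence $A=(A_1,\dots,A_k)$ of pairwise disjoint subsets of $[d]$ with $|A_i|=\lambda_i$; $T_\lambda$ is their set; $S_d$ acts by $\zeta A=(\zeta(A_1),\dots,\zeta(A_k))$. For $U\le S_d$, $T_{\lambda;U}$ is the set of $U$-orbits in $T_\lambda$. $N$ is the normalizer of $W$ in $S_d$ and $N'$ the intersection of $N$ with the normalizer of $W'$. $X_W$ is the group of one-dimensional complex characters of $W$; $N$ acts on it by $(\nu\chi)(\sigma)=\chi(\nu^{-1}\sigma\nu)$. For $\chi\in X_W$, $T_{\lambda;\chi}$ is the set of $W$-orbits $O_W(A)\subseteq T_\lambda$ such that $\chi\equiv1$ on the stabilizer $W_A$ of $A$ in $W$. For $a,b\in T_{\lambda;W}$, $\chi$ separates $a$ from $b$ if $a\in T_{\lambda;\chi}$ and $b\notin T_{\lambda;\chi}$. *)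

(* Defs.v *)
From mathcomp Require Import all_boot all_order all_algebra all_fingroup all_field all_character.
Set Implicit Arguments. Unset Strict Implicit. Unset Printing Implicit Defensive.
Import GRing.Theory Num.Theory.

Definition is_partition (d : nat) (lam : seq nat) : bool :=
  [&& sorted geq lam, all (fun x => 0 < x) lam & sumn lam == d].

Definition tabloid (d : nat) (lam : seq nat) := {ffun 'I_(size lam) -> {set 'I_d}}.

Section Tabloids.
Variables (d : nat) (lam : seq nat).
Local Notation tab := (tabloid d lam).

Definition is_tabloid (A : tab) : bool :=
  [forall i, #|A i| == nth 0 lam i] &&
  [forall i, forall j, (i != j) ==> [disjoint A i & A j]].

Definition tab_act (z : {perm 'I_d}) (A : tab) : tab := [ffun i => z @: A i].

Definition tab_orbit (U : {set {perm 'I_d}}) (A : tab) : {set tab} :=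
  [set tab_act z A | z in U].

Definition tab_stab (U : {set {perm 'I_d}}) (A : tab) : {set {perm 'I_d}} :=
  [set z in U | tab_act z A == A].

Definition is_tab_orbit (U : {set {perm 'I_d}}) (o : {set tab}) : bool :=
  [exists A, is_tabloid A && (o == tab_orbit U A)].

Definition in_Tchi (W : {group {perm 'I_d}}) (chi : 'CF(W)) (o : {set tab}) : bool :=
  [exists A, [&& is_tabloid A, o == tab_orbit W A &
                 [forall z in tab_stab W A, chi z == 1%R]]].

Definition separates (W : {group {perm 'I_d}}) (chi : 'CF(W)) (a b : {set tab}) : bool :=
  in_Tchi chi a && ~~ in_Tchi chi b.
End Tabloids.

(* (nu chi)(sigma) = chi(nu^-1 sigma nu) = (chi ^ nu^-1)%CF sigma *)
Definition char_act (d : nat) (W : {group {perm 'I_d}}) (nu : {perm 'I_d}) (chi : 'CF(W)) : 'CF(W) :=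
  (chi ^ nu^-1)%CF.

Definition Nprime (d : nat) (W W' : {group {perm 'I_d}}) : {set {perm 'I_d}} :=
  ('N(W) :&: 'N(W'))%g.

(* Main.v *)
Require Import Defs.
From mathcomp Require Import all_boot all_order all_algebra all_fingroup all_field all_character.
Set Implicit Arguments. Unset Strict Implicit. Unset Printing Implicit Defensive.
Import GRing.Theory Num.Theory.

Local Open Scope group_scope.
Section Helpers.
Variables (d : nat) (lam : seq nat) (W : {group {perm 'I_d}}).
Local Notation tab := (tabloid d lam).

Lemma tab_actM (x y : {perm 'I_d}) (A : tab) :
  tab_act (x * y)%g A = tab_act y (tab_act x A).
Proof.
apply/ffunP => i; rewrite !ffunE -imset_comp; apply: eq_imset => j.
by rewrite /= permM.
Qed.

Lemma tab_act1 (A : tab) : tab_act 1%g A = A.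
Proof.
apply/ffunP => i; rewrite !ffunE -[RHS]imset_id; apply: eq_imset => j.
by rewrite perm1.
Qed.

Definition Pc (chi : 'CF(W)) (A : tab) := [forall z in tab_stab W A, chi z == 1%R].

Lemma Pc_act (g : {perm 'I_d}) (A : tab) (chi : 'CF(W)) :
  g \in 'N(W) -> Pc chi (tab_act g A) = Pc (chi ^ g^-1)%CF A.
Proof.
move=> Ng; apply/forall_inP/forall_inP.
- move=> H y; rewrite inE => /andP[Wy /eqP fy].
  rewrite cfConjgE ?groupV // invgK; apply: H.
  rewrite inE memJ_norm // Wy /= -tab_actM /conjg mulKVg tab_actM fy.
  by [].
- move=> H z; rewrite inE => /andP[Wz /eqP fz].
  have := H (z ^ g^-1)%g.
  rewrite cfConjgE ?groupV // invgK conjgKV; apply.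
  rewrite inE memJ_norm ?groupV // Wz /=.
  apply/eqP; rewrite /conjg invgK mulgA !tab_actM fz -tab_actM mulgV.
  by rewrite tab_act1.
Qed.

Lemma orbit_mem (U : {group {perm 'I_d}}) (A : tab) : A \in tab_orbit U A.
Proof. by apply/imsetP; exists 1%g; rewrite ?group1 ?tab_act1. Qed.

Lemma in_TchiE (A : tab) (chi : 'CF(W)) :
  is_tabloid A -> in_Tchi chi (tab_orbit W A) = Pc chi A.
Proof.
move=> tA; apply/existsP/idP.
- case=> B /and3P[tB /eqP eAB PB].
  have : A \in tab_orbit W B by rewrite -eAB orbit_mem.
  case/imsetP=> w Ww ->.
  rewrite Pc_act; last by apply: (subsetP (normG W)).
  by rewrite cfConjg_id ?groupV.
- by move=> PA; exists A; rewrite tA eqxx.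
Qed.

Lemma orbit_actW (t : {perm 'I_d}) (A : tab) :
  t \in W -> tab_orbit W (tab_act t A) = tab_orbit W A.
Proof.
move=> Wt; apply/setP => B; apply/imsetP/imsetP.
- case=> z Wz ->; exists (t * z)%g; by rewrite ?groupM ?tab_actM.
- case=> z Wz ->; exists (t^-1 * z)%g; first by rewrite groupM ?groupV.
  by rewrite -tab_actM mulKVg.
Qed.

End Helpers.

Theorem corollary9p2p2 (d : nat) (W W' : {group {perm 'I_d}}) (lam : seq nat)
    (a a1 : {set tabloid d lam}) :
  W \subset W' -> #|W' : W|%g = 2 -> is_partition d lam ->
  is_tab_orbit W a -> is_tab_orbit W a1 -> a != a1 ->
  (exists A', is_tabloid A' && (a \subset tab_orbit W' A') && (a1 \subset tab_orbit W' A')) ->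
  (forall chi : 'CF(W), chi \is a linear_char -> separates chi a a1 ->
     exists2 nu, nu \in Nprime W W' & separates (char_act nu chi) a1 a) /\
  (forall chi : 'CF(W), chi \is a linear_char -> separates chi a1 a ->
     exists2 nu, nu \in Nprime W W' & separates (char_act nu chi) a a1).
Proof.
move=> sWW' iW _ /existsP[A /andP[tA /eqP ea]] /existsP[A1 /andP[tA1 /eqP ea1]] neq.
case=> A' /andP[/andP[_ sa] sa1].
have : A \in tab_orbit W' A' by apply: (subsetP sa); rewrite ea orbit_mem.
case/imsetP=> g W'g eA.
have : A1 \in tab_orbit W' A' by apply: (subsetP sa1); rewrite ea1 orbit_mem.
case/imsetP=> h W'h eA1.
set t := (g^-1 * h)%g.
have eA1t : A1 = tab_act t A by rewrite eA -tab_actM mulKVg.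
have W't : t \in W' by rewrite groupM ?groupV.
have nWt : t \notin W.
  apply/negP => Wt; move/negP: neq; apply.
  by rewrite ea ea1 eA1t orbit_actW.
have nW := index2_normal sWW' iW.
have NWt : t \in 'N(W) by apply: (subsetP (normal_norm nW)).
have N't : t \in Nprime W W'.
  by rewrite /Nprime inE NWt (subsetP (normG W')).
have ttW : (t * t)%g \in W.
  apply/negPn/negP => ntt.
  have : (t * t)%g \in W' :\: W by rewrite inE ntt groupM.
  rewrite -(@rcoset_index2 _ _ _ t sWW' iW) ?inE ?nWt //.
  case/rcosetP=> w Ww /mulIg et.
  by move/negP: nWt; apply; rewrite et.
have F1 (chi : 'CF(W)) : Pc (chi ^ t^-1)%CF A = Pc chi A1 by rewrite eA1t Pc_act.
have F2 (chi : 'CF(W)) : Pc (chi ^ t^-1)%CF A1 = Pc chi A.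
  rewrite eA1t Pc_act // -cfConjgMnorm ?groupV //.
  by rewrite -invMg cfConjg_id ?groupV.
split=> chi _.
- rewrite /separates ea ea1 (in_TchiE chi tA) (in_TchiE chi tA1) => /andP[P1 P2].
  exists t; first exact: N't.
  rewrite /char_act (in_TchiE _ tA) (in_TchiE _ tA1) F1 F2 P1.
  exact: P2.
- rewrite /separates ea ea1 (in_TchiE chi tA) (in_TchiE chi tA1) => /andP[P1 P2].
  exists t; first exact: N't.
  rewrite /char_act (in_TchiE _ tA) (in_TchiE _ tA1) F1 F2 P1.
  exact: P2.
Qed.
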